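(* Let $0<\rho<1$ and $r>0$, let $a=\rho r/(1-\rho^2)$, and let $\phi(x)=1-e^{-a\|x\|}$ for $x\in\mathbb{R}^2$. Then for every $x\in\mathbb{R}^2$ with $\|x\|=r$, $$T_\rho\phi(x)\ge1-e^{-\frac{\rho^2r^2}{2(1-\rho^2)}}\int_0^\infty\gamma_1(t)\,dt-e^{\frac32\frac{\rho^2r^2}{1-\rho^2}}\int_{-\infty}^{-\frac{2\rho r}{\sqrt{1-\rho^2}}}\gamma_1(t)\,dt.$$
   Context: $\gamma_m$ is the standard Gaussian density on $\mathbb{R}^m$; $T_\rho u(x)=\int_{\mathbb{R}^2}u(\rho x+y\sqrt{1-\rho^2})\gamma_2(y)\,dy$. *)

(* Defs.v *)
From HB Require Import structures.
From mathcomp Require Import all_boot all_order all_algebra.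
From mathcomp Require Import all_classical all_reals all_analysis.
Set Implicit Arguments. Unset Strict Implicit. Unset Printing Implicit Defensive.
Import Order.TTheory GRing.Theory Num.Theory.
Local Open Scope classical_set_scope.
Local Open Scope ring_scope.

Definition gamma1 {R : realType} (t : R) : R :=
  expR (- (t ^+ 2) / 2) / Num.sqrt (2 * pi).

Definition gamma2 {R : realType} (y : R * R) : R :=
  expR (- (y.1 ^+ 2 + y.2 ^+ 2) / 2) / (2 * pi).

Definition norm2 {R : realType} (x : R * R) : R :=
  Num.sqrt (x.1 ^+ 2 + x.2 ^+ 2).

Definition leb2 {R : realType} :=
  ((@lebesgue_measure R) \x (@lebesgue_measure R))%E.

Definition Trho {R : realType} (rho : R) (u : R * R -> R) (x : R * R) : \bar R :=
  (\int[leb2]_(y in [set: R * R])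
     (u (rho * x.1 + y.1 * Num.sqrt (1 - rho ^+ 2),
         rho * x.2 + y.2 * Num.sqrt (1 - rho ^+ 2)) * gamma2 y)%:E)%E.

(* Main.v *)
Require Import Defs.
From HB Require Import structures.
From mathcomp Require Import all_boot all_order all_algebra.
From mathcomp Require Import all_classical all_reals all_analysis.
From mathcomp Require Import ring lra measurable_realfun.
Import Order.TTheory GRing.Theory Num.Theory.
Import numFieldNormedType.Exports.
Local Open Scope classical_set_scope.
Local Open Scope ring_scope.


Section S_P1.
Context {R : realType}.
Notation mu := (@lebesgue_measure R).
Lemma shift_derive (c : R) : (fun x : R => x + c)^`()%classic = cst 1.
Proof.
by apply/funext => x; rewrite derive1E deriveD// derive_id derive_cst addr0.
Qed.

Lemma cont_shift (c : R) : continuous (fun x : R => x + c).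
Proof. by move=> x; apply: cvgD; [exact: cvg_id|exact: cvg_cst]. Qed.

Lemma shiftT (G : R -> R) (c : R) : continuous G -> (forall x, 0 <= G x) ->
  (\int[mu]_x (G (x + c))%:E = \int[mu]_x (G x)%:E)%E.
Proof.
move=> cG G0.
rewrite (@increasing_ge0_integration_by_substitutionT _ (fun x => x + c) G)//.
- by apply: eq_integral => x _; rewrite shift_derive /= mulr1.
- by move=> x y xy; rewrite ltrD2r.
- by rewrite shift_derive; exact: cst_continuous.
- by rewrite shift_derive; exact: is_cvg_cst.
- by rewrite shift_derive; exact: is_cvg_cst.
- exact: (@cvg_addrr_Ny R c).
- exact: (@cvg_addrr R c).
Qed.
Lemma shifty (G : R -> R) (a c : R) : continuous G -> (forall x, 0 <= G x) ->
  (\int[mu]_(x in `[a%R, +oo[) (G (x + c))%:E =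
   \int[mu]_(x in `[(a + c)%R, +oo[) (G x)%:E)%E.
Proof.
move=> cG G0.
transitivity (\int[mu]_(x in `[a%R, +oo[) (((G \o (fun x => x + c)) * (fun x => x + c)^`()%classic) x)%:E)%E.
  by apply: eq_integral => x _; rewrite shift_derive /= mulr1.
apply/esym; apply: (@increasing_ge0_integration_by_substitutiony R (fun x => x + c) G a).
- by move=> x y _ _ xy; rewrite ltrD2r.
- by rewrite shift_derive => x _; exact: cst_continuous.
- by rewrite shift_derive; exact: is_cvg_cst.
- by rewrite shift_derive; exact: is_cvg_cst.
- split; first by move=> x _.
  apply: cvg_at_right_filter; exact: cont_shift.
- exact: (@cvg_addrr R c).
- exact: continuous_subspaceT.
- by move=> x _.
Qed.
Lemma shiftNy (G : R -> R) (b c : R) : continuous G -> (forall x, 0 <= G x) ->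
  (\int[mu]_(x in `]-oo, b%R]) (G (x + c))%:E =
   \int[mu]_(x in `]-oo, (b + c)%R]) (G x)%:E)%E.
Proof.
move=> cG G0.
transitivity (\int[mu]_(x in `]-oo, b%R]) (((G \o (fun x => x + c)) * (fun x => x + c)^`()%classic) x)%:E)%E.
  by apply: eq_integral => x _; rewrite shift_derive /= mulr1.
apply/esym; apply: (@increasing_ge0_integration_by_substitutionNy R (fun x => x + c) G b).
- by move=> x y _ _ xy; rewrite ltrD2r.
- by rewrite shift_derive => x _; exact: cst_continuous.
- by rewrite shift_derive; exact: is_cvg_cst.
- by rewrite shift_derive; exact: cvg_cst.
- split; first by move=> x _.
  apply: cvg_at_left_filter; exact: cont_shift.
- exact: (@cvg_addrr_Ny R c).
- exact: continuous_subspaceT.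
- by move=> x _.
Qed.
End S_P1.

Section S_P2.
Context {R : realType}.
Notation mu := (@lebesgue_measure R).
Lemma cont_aff (k : R -> R) (a s : R) : continuous k ->
  continuous (fun x => k (a * x + s)).
Proof.
move=> ck x; apply: continuous_comp; last exact: ck.
apply: cvgD; last exact: cvg_cst.
by apply: cvgM; [exact: cvg_cst|exact: cvg_id].
Qed.

Lemma mlin (a b : R) : measurable_fun [set: R * R] (fun y : R * R => a * y.1 + b * y.2).
Proof.
apply: measurable_funD; apply: measurable_funM.
- exact: measurable_cst.
- exact: measurable_fst.
- exact: measurable_cst.
- exact: measurable_snd.
Qed.

Definition FF (k g : R -> R) (a b c d : R) (y : R * R) : \bar R :=
  (k (a * y.1 + b * y.2) * g (c * y.1 + d * y.2))%:E.

Lemma mFF (k g : R -> R) (a b c d : R) : continuous k -> continuous g ->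
  measurable_fun [set: R * R] (FF k g a b c d).
Proof.
move=> ck cg; apply/measurable_EFinP; apply: measurable_funM.
  by apply: measurableT_comp; [exact: continuous_measurable_fun|exact: mlin].
by apply: measurableT_comp; [exact: continuous_measurable_fun|exact: mlin].
Qed.

Lemma FF0 (k g : R -> R) (a b c d : R) : (forall x, 0 <= k x) -> (forall x, 0 <= g x) ->
  forall y, (0 <= FF k g a b c d y)%E.
Proof. by move=> k0 g0 y; rewrite lee_fin mulr_ge0. Qed.
Lemma cont_prod (k g : R -> R) (a s c t : R) : continuous k -> continuous g ->
  continuous (fun x => k (a * x + s) * g (c * x + t)).
Proof.
move=> ck cg x; apply: cvgM; [exact: cont_aff|exact: cont_aff].
Qed.

Lemma shear1 (k g : R -> R) (a b c d e : R) : continuous k -> continuous g ->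
  (forall x, 0 <= k x) -> (forall x, 0 <= g x) ->
  (\int[leb2]_y FF k g a (a * e + b) c (c * e + d) y =
   \int[leb2]_y FF k g a b c d y)%E.
Proof.
move=> ck cg k0 g0; rewrite /leb2.
rewrite fubini_tonelli2; [|exact: mFF|exact: FF0].
rewrite fubini_tonelli2; [|exact: mFF|exact: FF0].
apply: eq_integral => y _; rewrite /fubini_G.
pose F := fun x => k (a * x + b * y) * g (c * x + d * y).
transitivity (\int[mu]_x (F (x + e * y))%:E)%E.
  apply: eq_integral => x _; rewrite /FF /F /=; congr (_ * _)%:E; congr (_ _); ring.
transitivity (\int[mu]_x (F x)%:E)%E.
  apply: shiftT; first exact: cont_prod.
  by move=> x; rewrite mulr_ge0.
by apply: eq_integral => x _; rewrite /FF /F.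
Qed.

Lemma shear2 (k g : R -> R) (a b c d e : R) : continuous k -> continuous g ->
  (forall x, 0 <= k x) -> (forall x, 0 <= g x) ->
  (\int[leb2]_y FF k g (a + b * e) b (c + d * e) d y =
   \int[leb2]_y FF k g a b c d y)%E.
Proof.
move=> ck cg k0 g0; rewrite /leb2.
rewrite fubini_tonelli1; [|exact: mFF|exact: FF0].
rewrite fubini_tonelli1; [|exact: mFF|exact: FF0].
apply: eq_integral => x _; rewrite /fubini_F.
pose F := fun y => k (b * y + a * x) * g (d * y + c * x).
transitivity (\int[mu]_y (F (y + e * x))%:E)%E.
  apply: eq_integral => y _; rewrite /FF /F /=; congr (_ * _)%:E; congr (_ _); ring.
transitivity (\int[mu]_y (F y)%:E)%E.
  apply: shiftT; first exact: cont_prod.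
  by move=> y; rewrite mulr_ge0.
apply: eq_integral => y _; rewrite /FF /F /=.
by rewrite (addrC (b * y)) (addrC (d * y)).
Qed.

Lemma rot_gen (k g : R -> R) (a b c d u1 u2 : R) : continuous k -> continuous g ->
  (forall x, 0 <= k x) -> (forall x, 0 <= g x) ->
  u1 ^+ 2 + u2 ^+ 2 = 1 -> 1 + u1 != 0 ->
  (\int[leb2]_y FF k g (a * u1 - b * u2) (a * u2 + b * u1)
                      (c * u1 - d * u2) (c * u2 + d * u1) y =
   \int[leb2]_y FF k g a b c d y)%E.
Proof.
move=> ck cg k0 g0 hu hu1.
have e0 : 1 - u1 ^+ 2 - u2 ^+ 2 = 0 by rewrite -hu; ring.
pose al := u2 / (1 + u1); pose be := - u2.
have E1 (p q : R) : p * u1 - q * u2 = (p + (p * al + q) * be).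
  transitivity (p + (p * al + q) * be + (1 - u1 ^+ 2 - u2 ^+ 2) * (- p / (1 + u1))).
    by rewrite /al /be; field.
  by rewrite e0 mul0r addr0.
have E2 (p q : R) : p * u2 + q * u1 =
    (p + (p * al + q) * be) * al + (p * al + q).
  transitivity ((p + (p * al + q) * be) * al + (p * al + q)
     + (1 - u1 ^+ 2 - u2 ^+ 2) * (- (p * u2 / (1 + u1) ^+ 2 + q / (1 + u1)))).
    by rewrite /al /be; field.
  by rewrite e0 mul0r addr0.
rewrite E1 E2 E1 E2.
rewrite shear1 // shear2 // shear1 //.
Qed.
Lemma FF_ext (k g : R -> R) (a b c d a' b' c' d' : R) : a = a' -> b = b' -> c = c' -> d = d' ->
  FF k g a b c d = FF k g a' b' c' d'.
Proof. by move=> -> -> -> ->. Qed.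

Lemma FF_int_ext (k g : R -> R) (a b c d a' b' c' d' : R) :
  a = a' -> b = b' -> c = c' -> d = d' ->
  (\int[leb2]_y FF k g a b c d y = \int[leb2]_y FF k g a' b' c' d' y)%E.
Proof. by move=> -> -> -> ->. Qed.

Lemma rot_inv (k g : R -> R) (u1 u2 : R) : continuous k -> continuous g ->
  (forall x, 0 <= k x) -> (forall x, 0 <= g x) ->
  u1 ^+ 2 + u2 ^+ 2 = 1 ->
  (\int[leb2]_y FF k g u1 u2 (- u2) u1 y = \int[leb2]_y FF k g 1 0 0 1 y)%E.
Proof.
move=> ck cg k0 g0 hu.
have [h1|h1] := eqVneq (1 + u1) 0.
  have u1E : u1 = -1 by apply/eqP; rewrite -subr_eq0 opprK addrC h1.
  have u2E : u2 = 0.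
    apply/eqP; rewrite -sqrf_eq0; apply/eqP; move: hu; rewrite u1E sqrrN expr1n.
    by move=> h; rewrite -(addKr 1 (u2 ^+ 2)) h addNr.
  rewrite u1E u2E.
  have p1 : (0:R) ^+ 2 + 1 ^+ 2 = 1 by rewrite expr0n expr1n add0r.
  have p2 : (1:R) + 0 != 0 by rewrite addr0 oner_neq0.
  have r1 := rot_gen k g 0 1 (-1) 0 0 1 ck cg k0 g0 p1 p2.
  have r2 := rot_gen k g 1 0 0 1 0 1 ck cg k0 g0 p1 p2.
  transitivity (\int[leb2]_y FF k g 0 1 (-1) 0 y)%E.
    by rewrite -r1; apply: FF_int_ext; ring.
  by rewrite -r2; apply: FF_int_ext; ring.
rewrite -(rot_gen k g 1 0 0 1 u1 u2 ck cg k0 g0 hu h1).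
by apply: FF_int_ext; ring.
Qed.

Lemma prodFF (k g : R -> R) : continuous k -> continuous g ->
  (forall x, 0 <= k x) -> (forall x, 0 <= g x) ->
  (\int[leb2]_y FF k g 1 0 0 1 y =
   (\int[mu]_x (k x)%:E) * (\int[mu]_x (g x)%:E))%E.
Proof.
move=> ck cg k0 g0; rewrite /leb2.
rewrite fubini_tonelli1; [|exact: mFF|exact: FF0].
rewrite /fubini_F.
transitivity (\int[mu]_x ((k x)%:E * \int[mu]_y (g y)%:E))%E.
  apply: eq_integral => x _; rewrite -ge0_integralZl //=.
  - by apply: eq_integral => y _; rewrite /FF /= !mul1r !mul0r addr0 add0r EFinM.
  - by apply/measurable_EFinP; exact: continuous_measurable_fun.
  - by move=> y _; rewrite lee_fin.
  - by rewrite lee_fin.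
rewrite ge0_integralZr //=.
- by apply/measurable_EFinP; exact: continuous_measurable_fun.
- by move=> y _; rewrite lee_fin.
- by apply: integral_ge0 => y _; rewrite lee_fin.
Qed.
End S_P2.

Section S_P3.
Context {R : realType}.
Notation mu := (@lebesgue_measure R).
Lemma gamma1_ge0 (t : R) : 0 <= gamma1 t.
Proof. by rewrite /gamma1 divr_ge0 ?expR_ge0 ?sqrtr_ge0. Qed.

Lemma gamma1_cont : continuous (@gamma1 R).
Proof.
move=> t; apply: cvgM; last exact: cvg_cst.
apply: continuous_comp; last exact: continuous_expR.
apply: cvgM; last exact: cvg_cst.
apply: cvgN; exact: exprn_continuous.
Qed.

Lemma gamma1_normal : @gamma1 R = normal_pdf 0 1.
Proof.
apply/funext => t; rewrite /gamma1 normal_pdfE ?oner_neq0 //.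
rewrite /normal_peak /normal_fun subr0 expr1n mul1r [RHS]mulrC; congr (expR _ / Num.sqrt _); by rewrite mulr_natl.

Qed.

Lemma int_gamma1 : (\int[mu]_x (gamma1 x)%:E = 1)%E.
Proof. by rewrite gamma1_normal integral_normal_pdf. Qed.

Lemma gamma2E (y : R * R) s t : s ^+ 2 + t ^+ 2 = y.1 ^+ 2 + y.2 ^+ 2 ->
  gamma2 y = gamma1 s * gamma1 t.
Proof.
move=> e; rewrite /gamma2 /gamma1 -e mulf_div -expRD.
congr (_ / _); first by congr expR; rewrite !mulNr -opprD mulrDl.
rewrite -expr2 sqr_sqrtr //; apply: mulr_ge0 => //; exact: pi_ge0.
Qed.
End S_P3.

Section S_P4.
Context {R : realType}.
Notation mu := (@lebesgue_measure R).

Lemma split_int (f : R -> R) (b : R) : continuous f -> (forall x, 0 <= f x) ->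
  (\int[mu]_x (f x)%:E <=
   \int[mu]_(x in `[b, +oo[) (f x)%:E + \int[mu]_(x in `]-oo, b]) (f x)%:E)%E.
Proof.
move=> cf f0.
have mf : measurable_fun [set: R] (fun x => (f x)%:E).
  by apply/measurable_EFinP; exact: continuous_measurable_fun.
rewrite -(itv_setU_setT true b) ge0_integral_setU //=; last 2 first.
- by move=> x _; rewrite lee_fin.
- rewrite disj_set2E; apply/eqP; rewrite -subset0 => x []/= /[!in_itv]/= xb /andP[bx _].
  by move: (lt_le_trans xb bx); rewrite ltxx.
rewrite addeC; apply: leeD => //.
apply: ge0_subset_integral => //=.
- exact: measurable_funS mf.
- by move=> x _; rewrite lee_fin.
- by move=> x /=; rewrite !in_itv/= => /ltW.
by rewrite (itv_setU_setT true b).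
Qed.
Lemma expo1 (a s x : R) : - (a * (a * s ^+ 2 + s * x)) + - x ^+ 2 / 2 =
  - (a * (a * s ^+ 2) / 2) + - (x + a * s) ^+ 2 / 2.
Proof. by field; rewrite ?pnatr_eq0. Qed.

Lemma expo2 (a s x : R) : - (a * - (a * s ^+ 2 + s * x)) + - x ^+ 2 / 2 =
  3 / 2 * a * (a * s ^+ 2) + - (x - a * s) ^+ 2 / 2.
Proof. by field; rewrite ?pnatr_eq0. Qed.

Lemma L1 (p s a : R) : 0 < s -> 0 < a -> a * p = (a * s) ^+ 2 ->
  (\int[mu]_x (expR (- (a * `|p + s * x|)) * gamma1 x)%:E <=
   (expR (- (a * p / 2)))%:E * \int[mu]_(x in `[0%R, +oo[) (gamma1 x)%:E +
   (expR (3 / 2 * (a * p)))%:E *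
     \int[mu]_(x in `]-oo, (- (2 * (a * s)))%R]) (gamma1 x)%:E)%E.
Proof.
move=> s0 a0 hap.
have an0 : a != 0 by rewrite gt_eqF.
have hp : p = a * s ^+ 2.
  by apply: (mulfI an0); rewrite hap; ring.
set b := a * s.
have cn : continuous (fun x : R => `|p + s * x|).
  move=> x; apply: (@continuous_comp _ _ _ (fun x => p + s * x) (@Num.norm R R) x).
    apply: cvgD; first exact: cvg_cst.
    by apply: cvgM; [exact: cvg_cst|exact: cvg_id].
  exact: norm_continuous.
have cf : continuous (fun x => expR (- (a * `|p + s * x|)) * gamma1 x).
  move=> x; apply: cvgM; last exact: gamma1_cont.
  apply: continuous_comp; last exact: continuous_expR.
  by apply: cvgN; apply: cvgM; [exact: cvg_cst|exact: cn].
have f0 x : 0 <= expR (- (a * `|p + s * x|)) * gamma1 x.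
  by rewrite mulr_ge0 ?expR_ge0 ?gamma1_ge0.
have mg c : measurable_fun [set: R] (fun x => (gamma1 (x + c))%:E).
  apply/measurable_EFinP; apply: continuous_measurable_fun.
  by move=> x; apply: (@continuous_comp _ _ _ (fun x => x + c) gamma1 x); [exact: cont_shift|exact: gamma1_cont].
have E1 : (\int[mu]_(x in `[(- b)%R, +oo[)
     (expR (- (a * `|p + s * x|)) * gamma1 x)%:E =
   (expR (- (a * p / 2)))%:E * \int[mu]_(x in `[0%R, +oo[) (gamma1 x)%:E)%E.
  transitivity (\int[mu]_(x in `[(- b)%R, +oo[)
     ((expR (- (a * p / 2)))%:E * (gamma1 (x + b))%:E))%E.
    apply: eq_integral => x; rewrite inE /= in_itv /= andbT => hx.
    rewrite -EFinM; congr EFin.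
    have h2 : 0 <= s * (x + a * s).
      by apply: mulr_ge0; [exact: ltW|rewrite /b in hx; lra].
    rewrite ger0_norm; last by rewrite hp; nra.
    rewrite /gamma1 !mulrA -!expRD; congr (expR _ / _).
    by rewrite hp /b expo1.
  rewrite ge0_integralZl //=; [|by apply: (measurable_funS measurableT) => //; exact: mg
    |by move=> x _; rewrite lee_fin gamma1_ge0].
  rewrite shifty; [|exact: gamma1_cont|exact: gamma1_ge0].
  by rewrite addNr.
have E2 : (\int[mu]_(x in `]-oo, (- b)%R])
     (expR (- (a * `|p + s * x|)) * gamma1 x)%:E =
   (expR (3 / 2 * (a * p)))%:E *
     \int[mu]_(x in `]-oo, (- (2 * (a * s)))%R]) (gamma1 x)%:E)%E.
  transitivity (\int[mu]_(x in `]-oo, (- b)%R])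
     ((expR (3 / 2 * (a * p)))%:E * (gamma1 (x + - b))%:E))%E.
    apply: eq_integral => x; rewrite inE /= in_itv /= => hx.
    rewrite -EFinM; congr EFin.
    have h2 : s * (x + a * s) <= 0.
      by apply: mulr_ge0_le0; [exact: ltW|rewrite /b in hx; lra].
    rewrite ler0_norm; last by rewrite hp; nra.
    rewrite /gamma1 !mulrA -!expRD; congr (expR _ / _).
    by rewrite hp /b expo2.
  rewrite ge0_integralZl //=; [|by apply: (measurable_funS measurableT) => //; exact: mg
    |by move=> x _; rewrite lee_fin gamma1_ge0].
  rewrite shiftNy; [|exact: gamma1_cont|exact: gamma1_ge0].
  by rewrite (_ : - b + - b = - (2 * (a * s))) //; rewrite /b; ring.
by have := split_int _ (- b) cf f0; rewrite E1 E2.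
Qed.
End S_P4.

Section S_P5.
Context {R : realType}.
Notation mu := (@lebesgue_measure R).

Lemma mcomp (f : R -> R) (h : R * R -> R) : continuous f ->
  measurable_fun [set: R * R] h -> measurable_fun [set: R * R] (fun y => f (h y)).
Proof.
move=> cf mh; apply: measurableT_comp => //; exact: continuous_measurable_fun.
Qed.

Lemma m_Trho (rho a c1 c2 s : R) :
  measurable_fun [set: R * R] (fun y : R * R =>
    ((1 - expR (- (a * norm2 (rho * c1 + y.1 * s, rho * c2 + y.2 * s)))) *
      gamma2 y)%:E).
Proof.
apply/measurable_EFinP; apply: measurable_funM.
  apply: measurable_funB; first exact: measurable_cst.
  apply: mcomp; first exact: continuous_expR.
  apply: measurable_funN; apply: measurable_funM; first exact: measurable_cst.
  rewrite /norm2 /=; apply: mcomp; first exact: sqrt_continuous.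
  apply: measurable_funD; apply: measurable_funX; apply: measurable_funD;
    (try exact: measurable_cst); apply: measurable_funM;
    (try exact: measurable_cst); [exact: measurable_fst|exact: measurable_snd].
rewrite /gamma2; apply: measurable_funM; last exact: measurable_cst.
apply: mcomp; first exact: continuous_expR.
apply: measurable_funM; last exact: measurable_cst.
apply: measurable_funN; apply: measurable_funD; apply: measurable_funX;
  [exact: measurable_fst|exact: measurable_snd].
Qed.
Lemma cs_le (u1 u2 z1 z2 : R) : u1 ^+ 2 + u2 ^+ 2 = 1 ->
  `|u1 * z1 + u2 * z2| <= Num.sqrt (z1 ^+ 2 + z2 ^+ 2).
Proof.
move=> hu; rewrite -sqrtr_sqr ler_sqrt; last by rewrite addr_ge0 ?sqr_ge0.
have h0 : 0 <= (u1 * z2 - u2 * z1) ^+ 2 by rewrite sqr_ge0.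
have -> : z1 ^+ 2 + z2 ^+ 2 = (u1 ^+ 2 + u2 ^+ 2) * (z1 ^+ 2 + z2 ^+ 2)
  by rewrite hu mul1r.
suff : (u1 ^+ 2 + u2 ^+ 2) * (z1 ^+ 2 + z2 ^+ 2) - (u1 * z1 + u2 * z2) ^+ 2
   = (u1 * z2 - u2 * z1) ^+ 2.
  by move=> e; rewrite -subr_ge0 e.
ring.
Qed.

Lemma pw (rho r a s x1 x2 y1 y2 : R) : 0 < r -> 0 <= a ->
  x1 ^+ 2 + x2 ^+ 2 = r ^+ 2 ->
  1 - expR (- (a * `|rho * r + s * (x1 / r * y1 + x2 / r * y2)|)) <=
  1 - expR (- (a * norm2 (rho * x1 + y1 * s, rho * x2 + y2 * s))).
Proof.
move=> r0 a0 hx.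
have rn0 : r != 0 by rewrite gt_eqF.
have hu : (x1 / r) ^+ 2 + (x2 / r) ^+ 2 = 1.
  by rewrite !expr_div_n -mulrDl hx divff // expf_neq0.
have hw : rho * r + s * (x1 / r * y1 + x2 / r * y2) =
    x1 / r * (rho * x1 + y1 * s) + x2 / r * (rho * x2 + y2 * s).
  transitivity (rho * ((x1 ^+ 2 + x2 ^+ 2) / r) + s * (x1 / r * y1 + x2 / r * y2)).
    by rewrite hx expr2 mulrK ?unitfE.
  by field.
rewrite lerD2l lerN2 ler_expR lerN2 hw; apply: ler_wpM2l => //.
exact: cs_le.
Qed.
End S_P5.

Theorem lemma7p1 (R : realType) (rho r : R) :
  0 < rho -> rho < 1 -> 0 < r ->
  let a := rho * r / (1 - rho ^+ 2) in
  let phi := fun x : R * R => 1 - expR (- (a * norm2 x)) in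
  forall x : R * R, norm2 x = r ->
  ((1%:E
    - (expR (- (rho ^+ 2 * r ^+ 2 / (2 * (1 - rho ^+ 2)))))%:E
        * (\int[@lebesgue_measure R]_(t in `[0%R, +oo[) (gamma1 t)%:E)
    - (expR (3 / 2 * (rho ^+ 2 * r ^+ 2 / (1 - rho ^+ 2))))%:E
        * (\int[@lebesgue_measure R]_(t in `]-oo, (- (2 * rho * r / Num.sqrt (1 - rho ^+ 2)))%R])
             (gamma1 t)%:E))
   <= Trho rho phi x)%E.
Proof.
move=> rho0 rho1 r0 a phi x hx.
have h1 : 0 < 1 - rho ^+ 2 by rewrite subr_gt0 expr2; nra.
have h1n : 1 - rho ^+ 2 != 0 by rewrite gt_eqF.
have rn0 : r != 0 by rewrite gt_eqF.
set s := Num.sqrt (1 - rho ^+ 2).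
have s0 : 0 < s by rewrite sqrtr_gt0.
have sn0 : s != 0 by rewrite gt_eqF.
have s2 : s ^+ 2 = 1 - rho ^+ 2 by rewrite sqr_sqrtr // ltW.
have a0 : 0 < a by rewrite /a divr_gt0 // mulr_gt0.
have hx2 : x.1 ^+ 2 + x.2 ^+ 2 = r ^+ 2.
  by rewrite -hx /norm2 sqr_sqrtr // addr_ge0 ?sqr_ge0.
pose u1 := x.1 / r; pose u2 := x.2 / r.
have hu : u1 ^+ 2 + u2 ^+ 2 = 1.
  by rewrite /u1 /u2 !expr_div_n -mulrDl hx2 divff // expf_neq0.
pose g t := expR (- (a * `|rho * r + s * t|)).
pose k t := (1 - g t) * gamma1 t.
have g1 t : g t <= 1.
  by rewrite /g -[X in _ <= X]expR0 ler_expR oppr_le0 mulr_ge0 // ltW.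
have k0 t : 0 <= k t by rewrite /k mulr_ge0 ?subr_ge0 ?gamma1_ge0.
have cn : continuous (fun t : R => `|rho * r + s * t|).
  move=> t; apply: (@continuous_comp _ _ _ (fun t => rho * r + s * t) (@Num.norm R R) t).
    apply: cvgD; first exact: cvg_cst.
    by apply: cvgM; [exact: cvg_cst|exact: cvg_id].
  exact: norm_continuous.
have cg : continuous g.
  move=> t; apply: continuous_comp; last exact: continuous_expR.
  by apply: cvgN; apply: cvgM; [exact: cvg_cst|exact: cn].
have ck : continuous k.
  move=> t; apply: cvgM; last exact: gamma1_cont.
  by apply: cvgB; [exact: cvg_cst|exact: cg].
have hA : (\int[leb2]_y FF k gamma1 u1 u2 (- u2) u1 y <= Trho rho phi x)%E.
  rewrite /Trho; apply: ge0_le_integral => //.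
  - by move=> y _; apply: FF0 => //; exact: gamma1_ge0.
  - by apply: mFF => //; exact: gamma1_cont.
  - by rewrite /phi; exact: m_Trho.
  move=> y _; rewrite /FF lee_fin.
  rewrite (@gamma2E _ y (u1 * y.1 + u2 * y.2) (- u2 * y.1 + u1 * y.2)); last first.
    transitivity ((u1 ^+ 2 + u2 ^+ 2) * (y.1 ^+ 2 + y.2 ^+ 2)); first by ring.
    by rewrite hu mul1r.
  rewrite /k mulrA; apply: ler_wpM2r; first exact: gamma1_ge0.
  apply: ler_wpM2r; first exact: gamma1_ge0.
  rewrite /g /phi /u1 /u2; apply: pw => //; exact: ltW.
have hB : (\int[leb2]_y FF k gamma1 u1 u2 (- u2) u1 y = \int[lebesgue_measure]_t (k t)%:E)%E.
  rewrite rot_inv //; [|exact: gamma1_cont|exact: gamma1_ge0].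
  rewrite prodFF //; [|exact: gamma1_cont|exact: gamma1_ge0].
  by rewrite int_gamma1 mule1.
have mE (f : R -> R) : continuous f -> measurable_fun [set: R] (fun t => (f t)%:E).
  by move=> cf; apply/measurable_EFinP; exact: continuous_measurable_fun.
have hC : (\int[lebesgue_measure]_t (k t)%:E + \int[lebesgue_measure]_t (g t * gamma1 t)%:E = 1)%E.
  rewrite -ge0_integralD //; last 4 first.
  - by move=> t _; rewrite lee_fin.
  - exact: mE.
  - by move=> t _; rewrite lee_fin mulr_ge0 ?expR_ge0 ?gamma1_ge0.
  - apply: mE => t; apply: cvgM; [exact: cg|exact: gamma1_cont].
  rewrite -int_gamma1; apply: eq_integral => t _; rewrite -EFinD; congr EFin.
  by rewrite /k; ring.
have hap : a * (rho * r) = (a * s) ^+ 2.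
  by rewrite exprMn s2 /a; field.
have hD := L1 (rho * r) s a s0 a0 hap.
have e1 : a * (rho * r) / 2 = rho ^+ 2 * r ^+ 2 / (2 * (1 - rho ^+ 2)).
  by rewrite /a; field.
have e2 : a * (rho * r) = rho ^+ 2 * r ^+ 2 / (1 - rho ^+ 2).
  by rewrite /a; field.
have e3 : 2 * (a * s) = 2 * rho * r / s.
  rewrite /a -s2; field; rewrite ?expf_neq0 //.
rewrite e1 e2 e3 in hD.
set I1 := (\int[lebesgue_measure]_(t in `[0%R, +oo[) (gamma1 t)%:E)%E in hD *.
set I2 := (\int[lebesgue_measure]_(t in `]-oo, (- (2 * rho * r / s))%R]) (gamma1 t)%:E)%E in hD *.
set K := (\int[lebesgue_measure]_t (k t)%:E)%E in hB hC.
set G := (\int[lebesgue_measure]_t (g t * gamma1 t)%:E)%E in hC.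
have hD' : (G <= (expR (- (rho ^+ 2 * r ^+ 2 / (2 * (1 - rho ^+ 2)))))%:E * I1 +
   (expR (3 / 2 * (rho ^+ 2 * r ^+ 2 / (1 - rho ^+ 2))))%:E * I2)%E := hD.
have mg1 : measurable_fun [set: R] (fun t => (gamma1 t)%:E) by apply: mE; exact: gamma1_cont.
have I1le : (0 <= I1 <= 1)%E.
  apply/andP; split; first by apply: integral_ge0 => t _; rewrite lee_fin gamma1_ge0.
  rewrite -int_gamma1; apply: ge0_subset_integral => //.
  by move=> t _; rewrite lee_fin gamma1_ge0.
have I2le : (0 <= I2 <= 1)%E.
  apply/andP; split; first by apply: integral_ge0 => t _; rewrite lee_fin gamma1_ge0.
  rewrite -int_gamma1; apply: ge0_subset_integral => //.
  by move=> t _; rewrite lee_fin gamma1_ge0.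
have K0 : (0 <= K)%E by apply: integral_ge0 => t _; rewrite lee_fin.
have G0 : (0 <= G)%E.
  by apply: integral_ge0 => t _; rewrite lee_fin mulr_ge0 ?expR_ge0 ?gamma1_ge0.
have fin01 (z : \bar R) : (0 <= z <= 1)%E -> z \is a fin_num.
  move=> /andP[z0 z1]; rewrite ge0_fin_numE //; exact: le_lt_trans z1 (ltry 1).
have fI1 := fin01 _ I1le.
have fI2 := fin01 _ I2le.
have fK : K \is a fin_num.
  apply: fin01; rewrite K0 /= -hC; exact: leeDl.
have fG : G \is a fin_num.
  apply: fin01; rewrite G0 /= -hC; exact: leeDr.
apply: le_trans (le_trans _ hA); last by rewrite hB.
move: hC hD'; rewrite -(fineK fI1) -(fineK fI2) -(fineK fK) -(fineK fG).
rewrite -!EFinM -!EFinD => -[hC'].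
rewrite !lee_fin => hD''.
lra.
Qed.
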